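(* Let $\mathcal{X}$ be a probability distribution over a set of queries (the set is also denoted $\mathcal{X}$), let $k \geq 1$, and let $\hat q_1,\dots,\hat q_k,\hat c_1,\dots,\hat c_k : \mathcal{X} \to \mathbb{R}$ be integrable functions (quality and cost estimates of $k$ models). Let $B \in \mathbb{R}$ and assume there is at least one routing strategy $s$ with $C(s) \leqslant B$. Assume moreover that the set $\Lambda$ is finite. Then: (i) if some routing strategy $s \in S_0$ satisfies $C(s) \leqslant B$, then $s$ maximizes $Q$ over all routing strategies $s'$ with $C(s') \leqslant B$; (ii) otherwise, there exists $\lambda^* \in \mathbb{R}^+$ such that $S_{\lambda^*}$ contains a routing strategy with cost exactly $B$, and every routing strategy $s \in \bigcup_{\lambda \in \mathbb{R}^+} S_\lambda$ with $C(s) = B$ maximizes $Q$ over all routing strategies $s'$ with $C(s') \leqslant B$ (in particular all such strategies achieve the same optimal quality).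
   Context: A routing strategy is a measurable function $s : \mathcal{X} \to \mathbb{R}^k$ with $s_i(x) \geq 0$ for all $i$ and $\sum_{i=1}^k s_i(x) = 1$ for all $x \in \mathcal{X}$ ($s_i(x)$ is the probability of sending query $x$ to model $i$). Its expected quality is $Q(s) = \mathbb{E}_{x \sim \mathcal{X}}\left[\sum_{i=1}^k s_i(x)\hat q_i(x)\right]$ and its expected cost is $C(s) = \mathbb{E}_{x \sim \mathcal{X}}\left[\sum_{i=1}^k s_i(x)\hat c_i(x)\right]$. For $\lambda \in \mathbb{R}^+$ (nonnegative reals), $S_\lambda$ denotes the set of routing strategies $s$ such that for all $x \in \mathcal{X}$ and all $i \in \{1,\dots,k\}$: if $\hat q_i(x) - \lambda \hat c_i(x) < \max_j \left(\hat q_j(x) - \lambda \hat c_j(x)\right)$ then $s_i(x) = 0$. $\Lambda$ denotes the set of $\lambda \in \mathbb{R}$ for which there exist $x \in \mathcal{X}$ and $i \neq j$ with $\hat q_i(x) - \lambda \hat c_i(x) = \hat q_j(x) - \lambda \hat c_j(x)$. *)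

(* Defs.v *)
From HB Require Import structures.
From mathcomp Require Import all_boot all_order all_algebra.
From mathcomp Require Import all_classical all_reals all_analysis.
Set Implicit Arguments. Unset Strict Implicit. Unset Printing Implicit Defensive.
Import Order.TTheory GRing.Theory Num.Theory.
Local Open Scope classical_set_scope.
Local Open Scope ring_scope.

Section Routing.
Context {d : measure_display} {T : measurableType d} {R : realType}.
Variable (P : probability T R) (k : nat).
Variables (q c : 'I_k -> T -> R).

Definition routing (s : T -> 'I_k -> R) : Prop :=
  (forall i, measurable_fun setT (fun x => s x i)) /\
  (forall x i, 0 <= s x i) /\
  (forall x, \sum_(i < k) s x i = 1).

Definition Qual (s : T -> 'I_k -> R) : \bar R :=
  (\int[P]_x (\sum_(i < k) s x i * q i x)%:E)%E.
Definition Cost (s : T -> 'I_k -> R) : \bar R :=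
  (\int[P]_x (\sum_(i < k) s x i * c i x)%:E)%E.

(* max_j (q_j x - lam c_j x); the fold is seeded with the i-th value, which
   is itself among the j's, so this is exactly the maximum over all j *)
Definition max_score (lam : R) (x : T) (i : 'I_k) : R :=
  \big[Num.max/(q i x - lam * c i x)]_(j < k) (q j x - lam * c j x).

Definition in_S (lam : R) (s : T -> 'I_k -> R) : Prop :=
  forall x i, q i x - lam * c i x < max_score lam x i -> s x i = 0.

Definition Lambda : set R :=
  [set lam | exists x (i j : 'I_k), i != j /\
     q i x - lam * c i x = q j x - lam * c j x].

Definition optimal (B : R) (s : T -> 'I_k -> R) : Prop :=
  forall s', routing s' -> (Cost s' <= B%:E)%E -> (Qual s' <= Qual s)%E.
End Routing.

(* Main.v *)
Require Import Defs.
From HB Require Import structures.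
From mathcomp Require Import all_boot all_order all_algebra.
From mathcomp Require Import all_classical all_reals all_analysis.
From mathcomp Require Import finmap measurable_realfun lra zify.
Import Order.TTheory GRing.Theory Num.Theory.
Local Open Scope classical_set_scope.
Local Open Scope ring_scope.



Section Aux.
Context {R : realType}.

Lemma bigmax_geF (I : eqType) (r : seq I) (F : I -> R) a j :
  j \in r -> F j <= \big[Num.max/a]_(i <- r) F i.
Proof.
elim: r => // h r IH; rewrite inE big_cons => /orP[/eqP->|/IH H].
  by rewrite le_max lexx.
by rewrite le_max H orbT.
Qed.

Lemma bigmax_geT (I : finType) (F : I -> R) a j :
  F j <= \big[Num.max/a]_(i : I) F i.
Proof. by apply: bigmax_geF; rewrite mem_index_enum. Qed.

Lemma bigmax_lem (I : Type) (r : seq I) (F : I -> R) a m :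
  a <= m -> (forall j, F j <= m) -> \big[Num.max/a]_(i <- r) F i <= m.
Proof.
move=> am Fm; elim: r => [|h r IH]; rewrite ?big_nil ?big_cons //.
by rewrite ge_max Fm IH.
Qed.

Lemma disc_ivt (L : set R) (phi psi : R -> R) (B : R) :
  (forall a b, a < b -> (forall r, a < r < b -> ~ L r) -> phi a = psi b) ->
  forall n (l : seq R), (size l <= n)%N -> forall a b, a < b ->
  (forall r, a < r < b -> L r -> r \in l) -> B < phi a -> phi b <= B ->
  exists lam, a <= lam <= b /\ phi lam <= B /\ B < psi lam.
Proof.
move=> H; elim=> [|n IH] l hl a b ab hL pa pb.
  case: (pselect (exists r, a < r < b /\ L r)) => [[r [hr Lr]]|no].
    by move: hl (hL r hr Lr); rewrite leqn0 => /nilP ->.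
  exists b; rewrite (ltW ab) lexx; split => //; split => //.
  by rewrite -(H a b) // => r hr Lr; apply: no; exists r.
case: (pselect (exists r, a < r < b /\ L r)) => [[r [/andP[ar rb] Lr]]|no];
  last first.
  exists b; rewrite (ltW ab) lexx; split => //; split => //.
  by rewrite -(H a b) // => r hr Lr; apply: no; exists r.
have rl : r \in l by apply: hL => //; rewrite ar rb.
pose l' := [seq y <- l | y != r].
have hl' : (size l' <= n)%N.
  rewrite size_filter.
  have := count_predC (pred1 r) l.
  have : (0 < count (pred1 r) l)%N by rewrite -has_count has_pred1.
  move: hl; rewrite /predC1 /=.
  have -> : count (predC (pred1 r)) l = count (fun y => y != r) l by [].
  lia.
case: (lerP (phi r) B) => h.
  have [lam [/andP[l1 l2] rest]] := IH l' hl' a r ar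
    (fun r' hr' Lr' => ltac:(
      move: hr' => /andP[h1 h2];
      rewrite mem_filter (lt_eqF h2) /=; apply: hL => //;
      by rewrite h1 (lt_trans h2 rb))) pa h.
  by exists lam; rewrite l1 (le_trans l2 (ltW rb)).
have [lam [/andP[l1 l2] rest]] := IH l' hl' r b rb
    (fun r' hr' Lr' => ltac:(
      move: hr' => /andP[h1 h2];
      rewrite mem_filter (gt_eqF h1) /=; apply: hL => //;
      by rewrite h2 (lt_trans ar h1))) h pb.
by exists lam; rewrite l2 (le_trans (ltW ar) l1).
Qed.

Lemma fin_bound (A : set R) : finite_set A ->
  exists l : seq R, (forall r, A r -> r \in l).
Proof.
move=> /finite_fsetP[X ->]; exists (enum_fset X) => r /=; by [].
Qed.

Lemma seq_bound (l : seq R) : exists M, 0 < M /\ forall r, r \in l -> r < M.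
Proof.
exists (1 + \sum_(y <- l) `|y|); split.
  by apply: (lt_le_trans ltr01); rewrite lerDl sumr_ge0.
have H : forall r, r \in l -> `|r| <= \sum_(y <- l) `|y|.
  elim: l => // h t IH r; rewrite inE big_cons => /orP[/eqP->|/IH H].
    by rewrite lerDl sumr_ge0.
  by rewrite (le_trans H) // lerDr.
move=> r /H h; have := ler_norm r; lra.
Qed.

End Aux.



Section Pt.
Context {d : measure_display} {T : measurableType d} {R : realType}.
Variables (k : nat) (q c : 'I_k -> T -> R).

Definition sc (lam : R) (i : 'I_k) (x : T) : R := q i x - lam * c i x.

Lemma ms_ge lam x i j : sc lam j x <= max_score q c lam x i.
Proof.
rewrite /max_score /sc.
move: (mem_index_enum j); elim: (index_enum _) => // h t IH.
rewrite inE big_cons => /orP[/eqP->|/IH H]; first by rewrite le_max lexx.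
by rewrite le_max H orbT.
Qed.

Lemma ms_le lam x i m : (forall j, sc lam j x <= m) -> max_score q c lam x i <= m.
Proof.
move=> H; rewrite /max_score; elim: (index_enum _) => [|h t IH].
  by rewrite big_nil; apply: H.
by rewrite big_cons ge_max IH andbT; apply: H.
Qed.

Lemma pt_lagr lam (s s' : T -> 'I_k -> R) x (i0 : 'I_k) :
  routing s -> in_S q c lam s -> routing s' ->
  \sum_(i < k) s' x i * sc lam i x <= \sum_(i < k) s x i * sc lam i x.
Proof.
move=> [_ [s0 s1]] hS [_ [s'0 s'1]].
set M := max_score q c lam x i0.
have -> : \sum_(i < k) s x i * sc lam i x = \sum_(i < k) s x i * M.
  apply: eq_bigr => i _.
  case: (ltP (sc lam i x) (max_score q c lam x i)) => h.
    by rewrite (hS x i h) !mul0r.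
  have h2 : M <= max_score q c lam x i by apply: ms_le => j; apply: ms_ge.
  have h3 : sc lam i x <= M by apply: ms_ge.
  by congr (_ * _); apply/le_anti; rewrite h3 (le_trans h2 h).
rewrite -mulr_suml s1 mul1r.
apply: (@le_trans _ _ (\sum_(i < k) s' x i * M)).
  by apply: ler_sum => i _; apply: ler_wpM2l => //; apply: ms_ge.
by rewrite -mulr_suml s'1 mul1r.
Qed.

Definition beats lam (sg : R) i j x : bool :=
  (sc lam j x < sc lam i x) ||
  ((sc lam j x == sc lam i x) && (sg * c i x < sg * c j x)).

Definition win lam sg i x : bool :=
  \big[andb/true]_(j < k | j != i) beats lam sg i j x.

Lemma winP lam sg i x :
  reflect (forall j, j != i -> beats lam sg i j x) (win lam sg i x).
Proof.
rewrite /win big_andE; apply: (iffP forallP) => H j.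
  by move=> ji; exact: (implyP (H j) ji).
by apply/implyP; exact: H.
Qed.

Lemma win_uniq lam sg i j x : win lam sg i x -> win lam sg j x -> i = j.
Proof.
move=> /winP Hi /winP Hj; apply/eqP/negPn/negP => ij.
have ji : j != i by rewrite eq_sym.
move: (Hi j ji) (Hj i ij); rewrite /beats.
by move=> /orP[h1|/andP[/eqP e1 h1]] /orP[h2|/andP[/eqP e2 h2]]; lra.
Qed.

Hypothesis Hd : forall x i j, i != j -> q i x = q j x -> c i x = c j x -> False.

Lemma win_ex lam sg x (i0 : 'I_k) : sg != 0 -> exists i, win lam sg i x.
Proof.
move=> sg0.
have [j0 Hj0] : exists j0, forall j, sc lam j x <= sc lam j0 x.
  case: (@arg_maxP _ _ 'I_k i0 xpredT (fun j => sc lam j x) erefl) => j _ H.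
  by exists j => j'; apply: H.
have [i Pi Hi] : exists2 i, sc lam i x == sc lam j0 x &
    forall j, sc lam j x == sc lam j0 x -> sg * c i x <= sg * c j x.
  case: (@arg_minP _ _ 'I_k j0 (fun j => sc lam j x == sc lam j0 x)
    (fun j => sg * c j x) (eqxx _)) => i Pi H.
  by exists i.
exists i; apply/winP => j ji; rewrite /beats.
have ej : sc lam j x <= sc lam i x by rewrite (eqP Pi); exact: Hj0.
case: ltP => //= h.
have e : sc lam j x = sc lam i x by apply/le_anti; rewrite ej h.
rewrite e eqxx /=.
have /Hi : sc lam j x == sc lam j0 x by rewrite e.
rewrite le_eqVlt => /orP[/eqP e2|//].
exfalso; have cij : c i x = c j x by apply: (mulfI sg0).
apply: (Hd x i j) => //; first by rewrite eq_sym.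
by move: e; rewrite /sc cij => ?; lra.
Qed.

Lemma beats_shift a b i j x : a < b ->
  (forall r, a < r < b -> ~ Lambda q c r) -> i != j ->
  beats a 1 i j x -> beats b (-1) i j x.
Proof.
move=> ab nL ij; rewrite /beats /sc !mul1r !mulN1r.
move=> /orP[h|/andP[/eqP h hc]]; last first.
  have : 0 < (b - a) * (c j x - c i x) by apply: mulr_gt0; lra.
  by move=> H; apply/orP; left; lra.
case: (ltP (q j x - b * c j x) (q i x - b * c i x)) => //= h2.
have H0 : 0 < (b - a) * (c i x - c j x) by lra.
have e0 : 0 < c i x - c j x by move: H0; rewrite pmulr_rgt0 // subr_gt0.
case: (eqVneq (q j x - b * c j x) (q i x - b * c i x)) => /= [e|ne].
  lra.
exfalso.
have h3 : q i x - b * c i x < q j x - b * c j x by rewrite lt_neqAle h2 eq_sym ne.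
pose r := (q i x - q j x) / (c i x - c j x).
have re : r * (c i x - c j x) = q i x - q j x by rewrite /r divfK // gt_eqF.
apply: (nL r).
  apply/andP; split.
    by rewrite /r ltr_pdivlMr //; lra.
  by rewrite /r ltr_pdivrMr //; lra.
exists x, i, j; split => //; lra.
Qed.

Lemma win_eq a b i x (i0 : 'I_k) : a < b ->
  (forall r, a < r < b -> ~ Lambda q c r) ->
  win a 1 i x = win b (-1) i x.
Proof.
move=> ab nL.
have fwd : forall i, win a 1 i x -> win b (-1) i x.
  move=> i' /winP W; apply/winP => j ji.
  by apply: (@beats_shift a b i' j x ab nL); [rewrite eq_sym | exact: W].
case: (boolP (win a 1 i x)) => H; first by rewrite fwd.
apply/esym/negbTE/negP => Hb.
have [w Hw] := @win_ex a 1 x i0 (oner_neq0 R).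
have wi := @win_uniq b (-1) w i x (fwd _ Hw) Hb.
by rewrite -wi Hw in H.
Qed.

Lemma win_big M i j x : (forall r, Lambda q c r -> r < M) ->
  win M 1 i x -> c i x <= c j x.
Proof.
move=> HM /winP W; case: (eqVneq j i) => [->//|ji].
rewrite leNgt; apply/negP => cji.
move: (W j ji); rewrite /beats /sc !mul1r => /orP[h|/andP[_ h]]; last lra.
have e0 : 0 < c i x - c j x by lra.
pose r := (q i x - q j x) / (c i x - c j x).
have re : r * (c i x - c j x) = q i x - q j x by rewrite /r divfK // gt_eqF.
have : r < M by apply: HM; exists x, i, j; split; [by rewrite eq_sym|lra].
by rewrite /r ltr_pdivrMr //; lra.
Qed.

Lemma win_inS lam sg x i : win lam sg i x ->
  ~ (q i x - lam * c i x < max_score q c lam x i).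
Proof.
move=> /winP W h.
have : max_score q c lam x i <= sc lam i x.
  apply: ms_le => j; case: (eqVneq j i) => [->//|ji].
  move: (W j ji); rewrite /beats => /orP[/ltW //|/andP[/eqP -> _]//].
by move=> H; have := lt_le_trans h H; rewrite ltxx.
Qed.

End Pt.
Arguments sc {d T R k}. Arguments beats {d T R k}. Arguments win {d T R k}.



Section Meas.
Context {d : measure_display} {T : measurableType d} {R : realType}.
Variables (P : probability T R) (k : nat) (q c : 'I_k -> T -> R).
Hypothesis iq : forall i, P.-integrable setT (fun x => (q i x)%:E).
Hypothesis ic : forall i, P.-integrable setT (fun x => (c i x)%:E).

Lemma routing_le1 (s : T -> 'I_k -> R) x i : routing s -> s x i <= 1.
Proof.
move=> [_ [s0 s1]]; rewrite -(s1 x) (bigD1 i) //= lerDl.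
by apply: sumr_ge0 => j _.
Qed.

Lemma int_route (f : 'I_k -> T -> R) (s : T -> 'I_k -> R) :
  (forall i, P.-integrable setT (fun x => (f i x)%:E)) -> routing s ->
  P.-integrable setT (fun x => (\sum_(i < k) s x i * f i x)%:E).
Proof.
move=> fi hs; have [ms [s0 s1]] := hs.
apply: (eq_integrable measurableT
  (fun x => \sum_(i < k) ((s x i)%:E * (f i x)%:E))%E).
  by move=> x _; rewrite sumEFin.
apply: (integrable_sum measurableT) => i _.
apply: (integrableMr measurableT (ms i) _ (fi i)).
exists 1; split => // r r1 x _ /=.
by rewrite ger0_norm // (le_trans (routing_le1 _ x i hs)) // ltW.
Qed.

Lemma isc lam i : P.-integrable setT (fun x => (sc q c lam i x)%:E).
Proof.
apply: (eq_integrable measurableT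
  ((fun x => (q i x)%:E) \- (fun x => lam%:E * (c i x)%:E))%E).
  by move=> x _; rewrite /sc /= EFinB EFinM.
by apply: (integrableB measurableT) => //; apply: (integrableZl measurableT).
Qed.

Lemma msc lam i : measurable_fun setT (sc q c lam i).
Proof. exact/measurable_EFinP/(measurable_int _ (isc lam i)). Qed.

Lemma mc i : measurable_fun setT (c i).
Proof. exact/measurable_EFinP/(measurable_int _ (ic i)). Qed.

Lemma Cfin s : routing s -> Cost P c s = (fine (Cost P c s))%:E.
Proof. by move=> hs; rewrite fineK // (integrable_fin_num measurableT) // int_route. Qed.

Lemma Qfin s : routing s -> Qual P q s = (fine (Qual P q s))%:E.
Proof. by move=> hs; rewrite fineK // (integrable_fin_num measurableT) // int_route. Qed.

Lemma intZ (F : T -> R) t : P.-integrable setT (fun x => (F x)%:E) ->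
  (\int[P]_x (t * F x)%:E = t%:E * \int[P]_x (F x)%:E)%E.
Proof.
move=> iF; rewrite -integralZl //.
Qed.

Lemma lagr_key lam s : routing s ->
  (\int[P]_x (\sum_(i < k) s x i * sc q c lam i x)%:E)%E =
  (fine (Qual P q s) - lam * fine (Cost P c s))%:E.
Proof.
move=> hs.
have E : forall x, \sum_(i < k) s x i * sc q c lam i x =
   \sum_(i < k) s x i * q i x - lam * \sum_(i < k) s x i * c i x.
  move=> x; rewrite mulr_sumr -sumrB; apply: eq_bigr => i _.
  by rewrite /sc mulrBr mulrCA.
under eq_integral do rewrite E.
have i1 := int_route q s iq hs.
have i2 : P.-integrable setT (EFin \o (fun x => lam * \sum_(i < k) s x i * c i x)).
  exact: (integrableZl measurableT lam (int_route c s ic hs)).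
rewrite integralB_EFin //.
rewrite intZ; last exact: int_route.
rewrite EFinB EFinM fineK; last exact: (integrable_fin_num measurableT i1).
rewrite fineK //; exact: (integrable_fin_num measurableT (int_route c s ic hs)).
Qed.

Lemma lagr lam (s s' : T -> 'I_k -> R) (i0 : 'I_k) :
  routing s -> in_S q c lam s -> routing s' ->
  fine (Qual P q s') - lam * fine (Cost P c s') <=
  fine (Qual P q s) - lam * fine (Cost P c s).
Proof.
move=> hs hS hs'.
rewrite -lee_fin -!lagr_key //.
apply: le_integral => //.
- exact: (int_route (sc q c lam) s' (isc lam) hs').
- exact: (int_route (sc q c lam) s (isc lam) hs).
by move=> x _; rewrite lee_fin; apply: pt_lagr.
Qed.

End Meas.



Section Strat.
Context {d : measure_display} {T : measurableType d} {R : realType}.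
Variables (P : probability T R) (k : nat) (q c : 'I_k -> T -> R).
Hypothesis iq : forall i, P.-integrable setT (fun x => (q i x)%:E).
Hypothesis ic : forall i, P.-integrable setT (fun x => (c i x)%:E).
Hypothesis Hd : forall x i j, i != j -> q i x = q j x -> c i x = c j x -> False.
Variable i0 : 'I_k.

Definition G lam sg : T -> 'I_k -> R := fun x i => (win q c lam sg i x)%:R.

Lemma mwin lam sg i : measurable_fun setT (win q c lam sg i).
Proof.
rewrite /win; elim: (index_enum _) => [|j r IH].
  under eq_fun do rewrite big_nil.
  exact: measurable_cst.
under eq_fun do rewrite big_cons.
case: (j != i) => //; apply: measurable_and => //.
apply: measurable_or.
  by apply: measurable_fun_ltr; apply: (msc P k q c iq ic).
apply: measurable_and.
  by apply: measurable_fun_eqr; apply: (msc P k q c iq ic).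
by apply: measurable_fun_ltr; apply: measurable_funM => //; apply: (mc P k c ic).
Qed.

Lemma G_routing lam sg : sg != 0 -> routing (G lam sg).
Proof.
move=> sg0; split; [|split].
- move=> i; rewrite /G.
  have -> : (fun x => ((win q c lam sg i x)%:R : R)) =
            (fun x => if win q c lam sg i x then 1 else 0).
    by apply/funext => x; case: win.
  apply: measurable_fun_ifT; first exact: mwin.
  + exact: measurable_cst.
  + exact: measurable_cst.
- by move=> x i; rewrite /G ler0n.
- move=> x; have [w Hw] := win_ex k q c Hd lam sg x i0 sg0.
  rewrite (bigD1 w) //= /G Hw big1 ?addr0 // => j jw.
  case: (boolP (win q c lam sg j x)) => // Hj.
  by rewrite (win_uniq k q c lam sg j w x Hj Hw) eqxx in jw.
Qed.

Lemma G_inS lam sg : in_S q c lam (G lam sg).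
Proof.
move=> x i h; rewrite /G; case: (boolP (win q c lam sg i x)) => // W.
by exfalso; exact: (win_inS k q c lam sg x i W h).
Qed.

Lemma cost_comb t (g h : T -> 'I_k -> R) : routing g -> routing h ->
  Cost P c (fun x i => t * g x i + (1 - t) * h x i) =
  (t * fine (Cost P c g) + (1 - t) * fine (Cost P c h))%:E.
Proof.
move=> hg hh.
have ig := int_route P k c g ic hg.
have ih := int_route P k c h ic hh.
have E : (fun x => (\sum_(i < k) (t * g x i + (1 - t) * h x i) * c i x)%:E) =
  ((EFin \o (fun x => (t * \sum_(i < k) g x i * c i x)%R)) \+
   (EFin \o (fun x => ((1 - t) * \sum_(i < k) h x i * c i x)%R)))%E.
  apply/funext => x /=; rewrite -EFinD; congr EFin.
  rewrite !mulr_sumr -big_split; apply: eq_bigr => i _ /=.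
  by rewrite mulrDl !mulrA.
rewrite /Cost E integralD_EFin //; last 2 first.
- exact: (integrableZl measurableT t ig).
- exact: (integrableZl measurableT (1 - t) ih).
rewrite /= (intZ P (fun x => \sum_(i < k) g x i * c i x) t ig).
rewrite (intZ P (fun x => \sum_(i < k) h x i * c i x) (1 - t) ih).
move: (integrable_fin_num measurableT ig) (integrable_fin_num measurableT ih).
case: (\int[P]_x (\sum_(i < k) g x i * c i x)%:E)%E => [a| |] //.
by case: (\int[P]_x (\sum_(i < k) h x i * c i x)%:E)%E => [b| |].
Qed.

End Strat.
Arguments G {d T R k}.

Theorem theorem4 (d : measure_display) (T : measurableType d) (R : realType)
  (P : probability T R) (k : nat) (q c : 'I_k -> T -> R) (B : R) :
  (0 < k)%N ->
  (forall i, P.-integrable setT (fun x => (q i x)%:E)) ->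
  (forall i, P.-integrable setT (fun x => (c i x)%:E)) ->
  (exists s, routing s /\ (Cost P c s <= B%:E)%E) ->
  finite_set (Lambda q c) ->
  (forall s, routing s -> in_S q c 0 s -> (Cost P c s <= B%:E)%E ->
     optimal P q c B s) /\
  (~ (exists s, routing s /\ in_S q c 0 s /\ (Cost P c s <= B%:E)%E) ->
     (exists lam, 0 <= lam /\
        exists s, routing s /\ in_S q c lam s /\ Cost P c s = B%:E) /\
     (forall s, routing s -> (exists lam, 0 <= lam /\ in_S q c lam s) ->
        Cost P c s = B%:E -> optimal P q c B s)).
Proof.
move=> k0 iq ic [s0 [hs0 Cs0]] finL.
pose i0 : 'I_k := Ordinal k0.
have [l hl] := fin_bound _ finL.
have [M [M0 HM]] := seq_bound l.
have LM : forall r, Lambda q c r -> r < M by move=> r /hl /HM.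
have Hd : forall x i j, i != j -> q i x = q j x -> c i x = c j x -> False.
  move=> x i j ij hq hc.
  have : Lambda q c M by exists x, i, j; split => //; rewrite hq hc.
  by move/LM; rewrite ltxx.
have opt : forall lam s, 0 <= lam -> routing s -> in_S q c lam s ->
    (lam = 0 \/ Cost P c s = B%:E) -> (Cost P c s <= B%:E)%E ->
    optimal P q c B s.
  move=> lam s l0 hs hS hor hC s' hs' hC'.
  have := lagr P k q c iq ic lam s s' i0 hs hS hs'.
  rewrite (Qfin P k q iq s' hs') (Qfin P k q iq s hs) lee_fin.
  move: hC hC'; rewrite (Cfin P k c ic s hs) (Cfin P k c ic s' hs') !lee_fin.
  move=> hC hC' H.
  case: hor => [l00|].
    by move: H; rewrite l00 !mul0r !subr0 /=.
  move=> hCe; have e : fine (Cost P c s) = B by rewrite hCe.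
  have : 0 <= lam * B - lam * fine (Cost P c s').
    by rewrite -mulrBr mulr_ge0 // subr_ge0.
  move: H; rewrite e /=; lra.
split.
  move=> s hs hS hC; apply: (opt 0 s) => //; by left.
move=> Hno; split; last first.
  move=> s hs [lam [l0 hS]] hC; apply: (opt lam s) => //; first by right.
  by rewrite hC.
pose phi lam := fine (Cost P c (G q c lam 1)).
pose psi lam := fine (Cost P c (G q c lam (-1))).
have sgn : (-1 : R) != 0 by rewrite oppr_eq0 oner_neq0.
have H1 : forall a b, a < b -> (forall r, a < r < b -> ~ Lambda q c r) ->
    phi a = psi b.
  move=> a b ab nL; rewrite /phi /psi; congr (fine (Cost P c _)).
  apply/funext => x; apply/funext => i; rewrite /G.
  by rewrite (win_eq k q c Hd a b i x i0 ab nL).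
have p0 : B < phi 0.
  rewrite ltNge; apply/negP => h; apply: Hno; exists (G q c 0 1).
  split; first exact: (G_routing P k q c iq ic Hd i0 0 1 (@oner_neq0 R)).
  split; first exact: G_inS.
  by rewrite (Cfin P k c ic _ (G_routing P k q c iq ic Hd i0 0 1 (@oner_neq0 R))) lee_fin.
have pM : phi M <= B.
  rewrite -lee_fin /phi -(Cfin P k c ic _ (G_routing P k q c iq ic Hd i0 M 1 (@oner_neq0 R))).
  apply: le_trans Cs0; apply: le_integral => //.
  - exact: (int_route P k c _ ic (G_routing P k q c iq ic Hd i0 M 1 (@oner_neq0 R))).
  - exact: (int_route P k c _ ic hs0).
  move=> x _; rewrite lee_fin.
  have [w Hw] := win_ex k q c Hd M 1 x i0 (@oner_neq0 R).
  have -> : \sum_(i < k) G q c M 1 x i * c i x = c w x.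
    rewrite (bigD1 w) //= /G Hw mul1r big1 ?addr0 // => j jw.
    case: (boolP (win q c M 1 j x)) => Hj; last by rewrite mul0r.
    by rewrite (win_uniq k q c M 1 j w x Hj Hw) eqxx in jw.
  have [_ [s00 s01]] := hs0.
  apply: (@le_trans _ _ (\sum_(i < k) s0 x i * c w x)).
    by rewrite -mulr_suml s01 mul1r.
  apply: ler_sum => i _; apply: ler_wpM2l => //.
  exact: (win_big k q c M w i x LM Hw).
have [lam [/andP[la lb] [hphi hpsi]]] :=
  disc_ivt (Lambda q c) phi psi B H1 (size l) l (leqnn _) 0 M M0
    (fun r _ Lr => hl r Lr) p0 pM.
exists lam; split => //.
have hg := G_routing P k q c iq ic Hd i0 lam 1 (@oner_neq0 R).
have hh := G_routing P k q c iq ic Hd i0 lam (-1) sgn.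
pose t := (psi lam - B) / (psi lam - phi lam).
have dpos : 0 < psi lam - phi lam by lra.
have t0 : 0 <= t by rewrite /t divr_ge0 //; lra.
have t1 : t <= 1 by rewrite /t ler_pdivrMr // mul1r; lra.
have te : t * (psi lam - phi lam) = psi lam - B by rewrite /t divfK // gt_eqF.
exists (fun x i => t * G q c lam 1 x i + (1 - t) * G q c lam (-1) x i).
split; [|split].
- have [mg [g0 g1]] := hg; have [mh [h0 h1]] := hh.
  split; [|split].
  + move=> i; apply: measurable_funD; apply: measurable_funM => //;
      exact: measurable_cst.
  + move=> x i; apply: addr_ge0; apply: mulr_ge0 => //; lra.
  + move=> x; rewrite big_split /= -!mulr_sumr g1 h1; lra.
- move=> x i h.
  by rewrite (G_inS k q c lam 1 x i h) (G_inS k q c lam (-1) x i h) !mulr0 addr0.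
- rewrite (cost_comb P k c ic t _ _ hg hh); congr EFin.
  rewrite -/(phi lam) -/(psi lam); lra.
Qed.
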